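(* Let $n$ be the number of validators and let $f\in[0,n]$. If two conflicting chains are finalized according to any two respective views, then at least $\frac{n}{3}$ validators can be detected (from the messages in those views) to have violated either $\mathbf{E_1}$ or $\mathbf{E_2}$.
   Context: A set of $n$ validators exchange signed messages. A block is a pair $B=(b,p)$ where $b$ is a body (containing a reference to a parent block) and $p\ge 0$ is its slot; a parent always has strictly smaller slot; the genesis block $B_{\text{genesis}}=(b_{-1},-1)$ has no parent. Chains are identified with their last block; $\chi.p$ is the slot of its last block; $\preceq$ is the prefix relation and two chains conflict if neither is a prefix of the other. A view is a set of messages. A checkpoint is $\mathcal{C}=(\chi,c)$ with $c$ a slot. An FFG-vote $\mathcal{C}_1\to\mathcal{C}_2$ (source, target) is valid iff $\mathcal{C}_1.c<\mathcal{C}_2.c$ and $\mathcal{C}_1.\chi\preceq\mathcal{C}_2.\chi$; FFG-votes are carried inside VOTE messages of validators. In a view $\mathcal{V}$: $\mathcal{C}$ is justified iff $\mathcal{C}=(B_{\text{genesis}},0)$ or there is a set of VOTE messages in $\mathcal{V}$ from at least $\frac{2}{3}n$ distinct validators whose FFG-votes $\mathcal{S}\to\mathcal{T}$ are all valid, with $\mathcal{S}$ justified in $\mathcal{V}$, $\mathcal{S}.\chi\preceq\mathcal{C}.\chi\preceq\mathcal{T}.\chi$ and $\mathcal{T}.c=\mathcal{C}.c$. $\mathcal{C}$ is finalized iff $\mathcal{C}=(B_{\text{genesis}},0)$ or $\mathcal{C}$ is justified and there is a set of VOTE messages in $\mathcal{V}$ from at least $\frac{2}{3}n$ distinct validators each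 carrying a valid FFG-vote $\mathcal{C}\to\mathcal{T}$ with $\mathcal{T}.c=\mathcal{C}.c+1$. A chain $\chi$ is finalized according to $\mathcal{V}$ iff $\chi\preceq\mathcal{C}.\chi$ for some checkpoint $\mathcal{C}$ finalized in $\mathcal{V}$. Checkpoint preorder: $\mathcal{C}\le\mathcal{C}'$ iff $\mathcal{C}.c<\mathcal{C}'.c$, or $\mathcal{C}.c=\mathcal{C}'.c$ and $\mathcal{C}.\chi.p\le\mathcal{C}'.\chi.p$; $\mathcal{C}<\mathcal{C}'$ means $\mathcal{C}\le\mathcal{C}'$ and not $\mathcal{C}'\le\mathcal{C}$. A validator violates $\mathbf{E_1}$ if it sent two distinct FFG-votes $\mathcal{C}_1\to\mathcal{C}_2$, $\mathcal{C}_3\to\mathcal{C}_4$ with $\mathcal{C}_2.c=\mathcal{C}_4.c$; it violates $\mathbf{E_2}$ if it sent two distinct FFG-votes with $\mathcal{C}_3<\mathcal{C}_1$ and $\mathcal{C}_2.c<\mathcal{C}_4.c$. *)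

(* Defs.v *)
From mathcomp Require Import all_boot all_order all_algebra.
Set Implicit Arguments. Unset Strict Implicit. Unset Printing Implicit Defensive.
Import Order.TTheory GRing.Theory Num.Theory.

(* Chains are
   identified with their last block. *)
Record blocktree (B : Type) := BlockTree {
  genesis : B;
  parent  : B -> option B;
  slot    : B -> int;
  slot_genesis : slot genesis = (-1)%R;
  parent_genesis : parent genesis = None;
  slot_nonneg : forall b, b <> genesis -> (0 <= slot b)%R;
  parent_exists : forall b, b <> genesis -> exists b', parent b = Some b';
  parent_slot : forall b b', parent b = Some b' -> (slot b' < slot b)%R
}.

Section Defs.
Variables (B : Type) (T : blocktree B).

Definition prefix (chi1 chi2 : B) : Prop :=
  exists k : nat, iter k (fun o => obind (parent T) o) (Some chi2) = Some chi1.

Definition conflicting (chi1 chi2 : B) : Prop :=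
  ~ prefix chi1 chi2 /\ ~ prefix chi2 chi1.

Record checkpoint := Checkpoint { cp_chain : B; cp_slot : nat }.

Definition genesis_cp : checkpoint := Checkpoint (genesis T) 0.

Record ffg_vote := FFGVote { ffg_source : checkpoint; ffg_target : checkpoint }.

Definition valid_ffg (v : ffg_vote) : Prop :=
  (cp_slot (ffg_source v) < cp_slot (ffg_target v))%N /\
  prefix (cp_chain (ffg_source v)) (cp_chain (ffg_target v)).

Definition cp_le (C C' : checkpoint) : Prop :=
  (cp_slot C < cp_slot C')%N \/
  (cp_slot C = cp_slot C' /\ (slot T (cp_chain C) <= slot T (cp_chain C'))%R).

Definition cp_lt (C C' : checkpoint) : Prop := cp_le C C' /\ ~ cp_le C' C.

Variable n : nat.

(* A VOTE message (only its sender and its FFG vote matter here). *)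
Record vote_msg := VoteMsg { sender : 'I_n; msg_ffg : ffg_vote }.

Definition view := vote_msg -> Prop.

Definition view_union (V1 V2 : view) : view := fun m => V1 m \/ V2 m.

Inductive justified (V : view) : checkpoint -> Prop :=
| justified_genesis : justified V genesis_cp
| justified_votes : forall C : checkpoint,
    (exists W : {set 'I_n}, (2 * n <= 3 * #|W|)%N /\
       forall w, w \in W -> exists m : vote_msg,
         V m /\ sender m = w /\ valid_ffg (msg_ffg m) /\
         justified V (ffg_source (msg_ffg m)) /\
         prefix (cp_chain (ffg_source (msg_ffg m))) (cp_chain C) /\
         prefix (cp_chain C) (cp_chain (ffg_target (msg_ffg m))) /\
         cp_slot (ffg_target (msg_ffg m)) = cp_slot C) ->
    justified V C.

Definition finalized (V : view) (C : checkpoint) : Prop :=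
  C = genesis_cp \/
  (justified V C /\
   exists W : {set 'I_n}, (2 * n <= 3 * #|W|)%N /\
     forall w, w \in W -> exists m : vote_msg,
       [/\ V m, sender m = w, valid_ffg (msg_ffg m),
           ffg_source (msg_ffg m) = C
         & cp_slot (ffg_target (msg_ffg m)) = (cp_slot C).+1]).

Definition finalized_chain (V : view) (chi : B) : Prop :=
  exists C : checkpoint, finalized V C /\ prefix chi (cp_chain C).

Definition violates_E1 (V : view) (v : 'I_n) : Prop :=
  exists m1 m2 : vote_msg,
    V m1 /\ V m2 /\ sender m1 = v /\ sender m2 = v /\
    msg_ffg m1 <> msg_ffg m2 /\
    cp_slot (ffg_target (msg_ffg m1)) = cp_slot (ffg_target (msg_ffg m2)).

Definition violates_E2 (V : view) (v : 'I_n) : Prop :=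
  exists m1 m2 : vote_msg,
    V m1 /\ V m2 /\ sender m1 = v /\ sender m2 = v /\
    msg_ffg m1 <> msg_ffg m2 /\
    cp_lt (ffg_source (msg_ffg m2)) (ffg_source (msg_ffg m1))
    /\ (cp_slot (ffg_target (msg_ffg m1)) < cp_slot (ffg_target (msg_ffg m2)))%N.

End Defs.

(* Main.v *)
Require Import Defs.
From mathcomp Require Import all_boot all_order all_algebra.
From mathcomp Require Import zify.
From Stdlib Require Import Classical.
Import Order.TTheory GRing.Theory Num.Theory.
Local Notation prefix := Defs.prefix.
Set Implicit Arguments. Unset Strict Implicit.

Section Aux.
Variables (B : Type) (T : blocktree B) (n : nat).

Lemma iter_none k : iter k (fun o => obind (parent T) o) None = None.
Proof. by elim: k => //= k ->. Qed.

Lemma prefix_refl a : prefix T a a.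
Proof. by exists 0. Qed.

Lemma prefix_trans a b c : prefix T a b -> prefix T b c -> prefix T a c.
Proof. move=> [k1 H1] [k2 H2]; exists (k1 + k2); by rewrite iterD H2 H1. Qed.

Lemma prefix_total a b c : prefix T a c -> prefix T b c -> prefix T a b \/ prefix T b a.
Proof.
move=> [k1 H1] [k2 H2]; case: (leqP k1 k2) => hk.
- right; exists (k2 - k1); by rewrite -H1 -iterD subnK.
- left; exists (k1 - k2); rewrite -H2 -iterD subnK //; exact: ltnW.
Qed.

Lemma iter_slot k : forall a b, iter k.+1 (fun o => obind (parent T) o) (Some b) = Some a ->
  (slot T a < slot T b)%R.
Proof.
elim: k => [|k IH] a b.
  rewrite /=; case E: (parent T b) => [b'|] //= [<-]; exact: parent_slot E.
rewrite iterSr /=; case E: (parent T b) => [b'|]; last by rewrite iter_none.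
move=> /IH h; apply: lt_trans h _; exact: parent_slot E.
Qed.

Lemma prefix_slot a b : prefix T a b -> a <> b -> (slot T a < slot T b)%R.
Proof. move=> [[|k] H] hne; first by move: H => [] /esym. exact: iter_slot H. Qed.

Lemma genesis_only a : prefix T a (genesis T) -> a = genesis T.
Proof.
move=> [[|k] H]; first by case: H.
by move: H; rewrite iterSr /= parent_genesis iter_none.
Qed.

Lemma genesis_prefix_aux N : forall b, (slot T b + 1 <= N%:Z)%R -> prefix T (genesis T) b.
Proof.
elim: N => [|N IH] b hb.
  case: (classic (b = genesis T)) => [->|hne]; first exact: prefix_refl.
  have := slot_nonneg hne; lia.
case: (classic (b = genesis T)) => [->|hne]; first exact: prefix_refl.
have [b' E] := parent_exists hne.
have hs := parent_slot E.
apply: (@prefix_trans _ b'); first by apply: IH; lia.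
by exists 1; rewrite /= E.
Qed.

Lemma genesis_prefix b : prefix T (genesis T) b.
Proof.
apply: (@genesis_prefix_aux `|(slot T b + 1)%R|%N).
have : (slot T b + 1 <= `|slot T b + 1|%R)%R by apply: ler_norm.
by rewrite -abszE.
Qed.

Lemma card_inter (W1 W2 : {set 'I_n}) :
  (2 * n <= 3 * #|W1|)%N -> (2 * n <= 3 * #|W2|)%N -> (n <= 3 * #|W1 :&: W2|)%N.
Proof.
move=> h1 h2; have := cardsUI W1 W2.
have := max_card (W1 :|: W2); rewrite card_ord => h3 h4; lia.
Qed.

Definition viol (U : view B n) v := violates_E1 U v \/ violates_E2 T U v.
Definition goal (U : view B n) := exists W : {set 'I_n}, (n <= 3 * #|W|)%N /\
  forall v, v \in W -> viol U v.

Lemma justified_inv (V : view B n) C : justified T V C -> C = genesis_cp T \/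
  (exists W : {set 'I_n}, (2 * n <= 3 * #|W|)%N /\
       forall w, w \in W -> exists m : vote_msg B n,
         V m /\ sender m = w /\ valid_ffg T (msg_ffg m) /\
         justified T V (ffg_source (msg_ffg m)) /\
         prefix T (cp_chain (ffg_source (msg_ffg m))) (cp_chain C) /\
         prefix T (cp_chain C) (cp_chain (ffg_target (msg_ffg m))) /\
         cp_slot (ffg_target (msg_ffg m)) = cp_slot C).
Proof. by case=> [|C0 H]; [left|right]. Qed.

Variables (Va Vb U : view B n) (HaU : forall m, Va m -> U m) (HbU : forall m, Vb m -> U m).

Lemma same_slot (C S : checkpoint B) : justified T Va C -> justified T Vb S ->
  cp_slot S = cp_slot C -> cp_chain C <> genesis T ->
  (slot T (cp_chain C) <= slot T (cp_chain S))%R ->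
  ~ prefix T (cp_chain C) (cp_chain S) -> goal U.
Proof.
move=> hC hS eqs hCg hsl hnp.
have hCs := slot_nonneg hCg.
case: (justified_inv hC) => [eC|[W1 [h1 H1]]]; first by rewrite eC in hCg.
case: (justified_inv hS) => [eS|[W2 [h2 H2]]].
  by move: hsl; rewrite eS /= slot_genesis; lia.
exists (W1 :&: W2); split; first exact: card_inter.
move=> v; rewrite inE => /andP [v1 v2].
have [m1 [Vm1 [sm1 [_ [_ [_ [p1 t1]]]]]]] := H1 v v1.
have [m2 [Vm2 [sm2 [_ [_ [_ [p2 t2]]]]]]] := H2 v v2.
left; exists m1, m2; do 4 (split => //; auto).
split; last by rewrite t1 t2 eqs.
move=> heq; rewrite heq in p1.
case: (prefix_total p1 p2) => // hp.
case: (classic (cp_chain S = cp_chain C)) => [e|ne].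
  by apply: hnp; rewrite e; exact: prefix_refl.
have := prefix_slot hp ne; move: hsl; lia.
Qed.

Lemma main (C1 : checkpoint B) : justified T Va C1 ->
  (exists W : {set 'I_n}, (2 * n <= 3 * #|W|)%N /\
     forall w, w \in W -> exists m : vote_msg B n,
       [/\ Va m, sender m = w, valid_ffg T (msg_ffg m),
           ffg_source (msg_ffg m) = C1
         & cp_slot (ffg_target (msg_ffg m)) = (cp_slot C1).+1]) ->
  cp_chain C1 <> genesis T ->
  forall N J, (cp_slot J < N)%N -> justified T Vb J -> (cp_slot C1 < cp_slot J)%N ->
  ~ prefix T (cp_chain C1) (cp_chain J) -> goal U.
Proof.
move=> hC1 [W1 [h1 H1]] hg N; elim: N => [|N IH] J // hN hJ hlt hnp.
case: (justified_inv hJ) => [eJ|[W2 [h2 H2]]]; first by rewrite eJ in hlt.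
pose P (m : vote_msg B n) := (cp_slot C1 < cp_slot (ffg_source (msg_ffg m)))%N \/
   (cp_slot (ffg_source (msg_ffg m)) = cp_slot C1 /\
    (slot T (cp_chain C1) <= slot T (cp_chain (ffg_source (msg_ffg m))))%R).
case: (classic (exists w, w \in W1 :&: W2 /\ exists m : vote_msg B n,
         Vb m /\ sender m = w /\ valid_ffg T (msg_ffg m) /\
         justified T Vb (ffg_source (msg_ffg m)) /\
         prefix T (cp_chain (ffg_source (msg_ffg m))) (cp_chain J) /\
         prefix T (cp_chain J) (cp_chain (ffg_target (msg_ffg m))) /\
         cp_slot (ffg_target (msg_ffg m)) = cp_slot J /\ P m)).
  move=> [w [_ [m [Vm [_ [[vs _] [js [ps [_ [ts Pm]]]]]]]]]].
  have hnp' : ~ prefix T (cp_chain C1) (cp_chain (ffg_source (msg_ffg m))).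
    by move=> hp; apply: hnp; exact: prefix_trans hp ps.
  case: Pm => [lt1|[e1 le1]].
    apply: (IH (ffg_source (msg_ffg m))) => //; lia.
  exact: (same_slot hC1 js).
move=> hno.
exists (W1 :&: W2); split; first exact: card_inter.
move=> v hv; move: (hv); rewrite inE => /andP [v1 v2].
have [m1 [Vm1 sm1 _ src1 t1]] := H1 v v1.
have [m2 [Vm2 [sm2 [vm2 [js [ps [pt t2]]]]]]] := H2 v v2.
have nP : ~ P m2.
  move=> Pm; apply: hno; exists v; split => //; exists m2; do 7 (split => //).
have hlt2 : cp_lt T (ffg_source (msg_ffg m2)) C1.
  rewrite /P in nP; rewrite /cp_lt /cp_le; split.
    case: (ltngtP (cp_slot (ffg_source (msg_ffg m2))) (cp_slot C1)) => e; [by left| |].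
      by exfalso; apply: nP; left.
    right; split => //; case: (lerP (slot T (cp_chain (ffg_source (msg_ffg m2))))
                                       (slot T (cp_chain C1))) => // hl.
    by exfalso; apply: nP; right; split => //; exact: ltW.
  move=> [e|[e hl]]; apply: nP; [by left|by right].
have hne : msg_ffg m1 <> msg_ffg m2.
  move=> heq; move: hlt2; rewrite -heq src1 => [[hl hnl]]; exact: hnl hl.
case: (eqVneq (cp_slot J) (cp_slot C1).+1) => eJ.
  left; exists m1, m2; do 5 (split => //; auto); by rewrite t1 t2 eJ.
right; exists m1, m2; do 5 (split => //; auto).
split; first by rewrite src1.
rewrite t1 t2; move: eJ hlt => /eqP; lia.
Qed.

End Aux.

Theorem lemma4p2 (B : Type) (T : blocktree B) (n f : nat) (hf : (f <= n)%N)
  (V1 V2 : view B n) (chi1 chi2 : B) :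
  finalized_chain T V1 chi1 -> finalized_chain T V2 chi2 ->
  conflicting T chi1 chi2 ->
  exists W : {set 'I_n}, (n <= 3 * #|W|)%N /\
    forall v, v \in W ->
      violates_E1 (view_union V1 V2) v \/ violates_E2 T (view_union V1 V2) v.
Proof.
move=> [C1 [HF1 p1]] [C2 [HF2 p2]] [nc1 nc2].
have g1 : cp_chain C1 <> genesis T.
  move=> e; rewrite e in p1; apply: nc1; rewrite (genesis_only p1); exact: genesis_prefix.
have g2 : cp_chain C2 <> genesis T.
  move=> e; rewrite e in p2; apply: nc2; rewrite (genesis_only p2); exact: genesis_prefix.
have n12 : ~ prefix T (cp_chain C1) (cp_chain C2).
  move=> h; have p1' := prefix_trans p1 h.
  by case: (prefix_total p1' p2).
have n21 : ~ prefix T (cp_chain C2) (cp_chain C1).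
  move=> h; have p2' := prefix_trans p2 h.
  by case: (prefix_total p1 p2').
case: HF1 => [e|[j1 F1]]; first by rewrite e in g1.
case: HF2 => [e|[j2 F2]]; first by rewrite e in g2.
have HU1 : forall m, V1 m -> view_union V1 V2 m by move=> m h; left.
have HU2 : forall m, V2 m -> view_union V1 V2 m by move=> m h; right.
case: (ltngtP (cp_slot C1) (cp_slot C2)) => e.
- exact: (main HU1 HU2 j1 F1 g1 (N := (cp_slot C2).+1) _ j2 e n12).
- exact: (main HU2 HU1 j2 F2 g2 (N := (cp_slot C1).+1) _ j1 e n21).
- move: F1 F2 => [W1 [h1 H1]] [W2 [h2 H2]].
  exists (W1 :&: W2); split; first exact: card_inter.
  move=> v; rewrite inE => /andP [v1 v2].
  have [m1 [Vm1 sm1 _ src1 t1]] := H1 v v1.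
  have [m2 [Vm2 sm2 _ src2 t2]] := H2 v v2.
  left; exists m1, m2; do 4 (split; first by [left|right|]).
  split; last by rewrite t1 t2 e.
  move=> heq; apply: n12; rewrite -src1 heq src2; exact: prefix_refl.
Qed.
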